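(* For almost every $\mathbf{U}$ (in the setup below) there exists a unique canonical structured basis of $\mathbf{U}$. That is, there is exactly one $\mathbf{V}\in\mathbb{R}^{n\times r}$ which is a structured basis of $\mathbf{U}$ and also satisfies the canonical pattern.
   Context: Setup: Let $n,m_1,m_2$ be positive integers and $r,r_1,r_2$ integers with $1\le r_1,r_2\le r\le \min\{n,r_1+r_2\}$. The matrix $\mathbf{U}=[\mathbf{U}_1|\mathbf{U}_2]\in\mathbb{R}^{n\times(m_1+m_2)}$ has first view $\mathbf{U}_1\in\mathbb{R}^{n\times m_1}$ and second view $\mathbf{U}_2\in\mathbb{R}^{n\times m_2}$, and satisfies $\mathrm{rank}(\mathbf{U}_1)=r_1$, $\mathrm{rank}(\mathbf{U}_2)=r_2$, $\mathrm{rank}(\mathbf{U})=r$. ''For almost every $\mathbf{U}$'' means: outside a Lebesgue-null subset of the set of such matrices. Set $r_1'=r-r_2$, $r_2'=r-r_1$, $r'=r_1+r_2-r$. A structured basis of $\mathbf{U}$ is a matrix $\mathbf{V}=[\mathbf{V}_1|\mathbf{V}_2|\mathbf{V}_3]\in\mathbb{R}^{n\times r}$ with $\mathbf{V}_1\in\mathbb{R}^{n\times r_1'}$, $\mathbf{V}_2\in\mathbb{R}^{n\times r'}$, $\mathbf{V}_3\in\mathbb{R}^{n\times r_2'}$, such that: - the columns of $[\mathbf{V}_1|\mathbf{V}_2]$ form a basis of the column space of $\mathbf{U}_1$; - the columns of $[\mathbf{V}_2|\mathbf{V}_3]$ form a basis of the column space of $\mathbf{U}_2$; - the columns of $\mathbf{V}$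 form a basis of the column space of $\mathbf{U}$. Canonical pattern: let $M=\max(r_1',r_2')$ and let $R=\{M+1,\dots,M+r'\}$ (a set of row indices). Then $\mathbf{V}$ satisfies the canonical pattern if: - $\mathbf{V}(1{:}r_1',\,1{:}r_1')=\mathbf{I}_{r_1'}$; - $\mathbf{V}(1{:}r_2',\,r_1+1{:}r_1+r_2')=\mathbf{I}_{r_2'}$; - $\mathbf{V}(R,\,r_1'+1{:}r_1'+r')=\mathbf{I}_{r'}$; - $\mathbf{V}(R,\,1{:}r_1')=\mathbf{0}_{r'\times r_1'}$; - $\mathbf{V}(R,\,r_1+1{:}r_1+r_2')=\mathbf{0}_{r'\times r_2'}$. *)

(* Defs.v *)
(* classical real numbers R.  Matrices are represented as
   functions nat -> nat -> R; only the entries with row index < #rows and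
   column index < #cols are meaningful. *)
From Stdlib Require Import Reals Arith.
Open Scope R_scope.

Definition vec := nat -> R.
Definition mat := nat -> nat -> R.

Fixpoint sumR (k : nat) (f : nat -> R) : R :=
  match k with O => 0 | S k' => sumR k' f + f k' end.
Fixpoint prodR (k : nat) (f : nat -> R) : R :=
  match k with O => 1 | S k' => prodR k' f * f k' end.

Definition in_colspace (n m : nat) (A : mat) (v : vec) : Prop :=
  exists c : vec, forall i, (i < n)%nat -> v i = sumR m (fun j => c j * A i j).

Definition lin_indep (n k : nat) (B : mat) : Prop :=
  forall c : vec,
    (forall i, (i < n)%nat -> sumR k (fun j => c j * B i j) = 0) ->
    forall j, (j < k)%nat -> c j = 0.

Definition is_colbasis (n k : nat) (B : mat) (m : nat) (A : mat) : Prop :=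
  (forall j, (j < k)%nat -> in_colspace n m A (fun i => B i j)) /\
  lin_indep n k B /\
  (forall v, in_colspace n m A v -> in_colspace n k B v).

Definition rank_eq (n m : nat) (A : mat) (r : nat) : Prop :=
  exists B : mat, is_colbasis n r B m A.

(* the views of U = [U1 | U2] *)
Definition view1 (U : mat) : mat := U.
Definition view2 (m1 : nat) (U : mat) : mat := fun i j => U i (m1 + j)%nat.

Definition kdelta (i j : nat) : R := if Nat.eqb i j then 1 else 0.

(* V = [V1|V2|V3] (n x r) is a structured basis of U = [U1|U2];
   V1 = columns 0..r1'-1, V2 = columns r1'..r1-1, V3 = columns r1..r-1 *)
Definition structured_basis (n m1 m2 r1 r2 r : nat) (U V : mat) : Prop :=
  let r1' := (r - r2)%nat in
  is_colbasis n r1 V m1 (view1 U) /\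
  is_colbasis n r2 (fun i j => V i (r1' + j)%nat) m2 (view2 m1 U) /\
  is_colbasis n r V (m1 + m2) U.

(* canonical pattern, translated to 0-based indices: rows 1..k become
   0..k-1, and R = {M+1,...,M+r'} becomes {M,...,M+r'-1} *)
Definition canonical_pattern (r1 r2 r : nat) (V : mat) : Prop :=
  let r1' := (r - r2)%nat in
  let r2' := (r - r1)%nat in
  let r' := (r1 + r2 - r)%nat in
  let M := Nat.max r1' r2' in
  (forall i j, (i < r1')%nat -> (j < r1')%nat -> V i j = kdelta i j) /\
  (forall i j, (i < r2')%nat -> (j < r2')%nat -> V i (r1 + j)%nat = kdelta i j) /\
  (forall a b, (a < r')%nat -> (b < r')%nat -> V (M + a)%nat (r1' + b)%nat = kdelta a b) /\
  (forall a j, (a < r')%nat -> (j < r1')%nat -> V (M + a)%nat j = 0) /\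
  (forall a j, (a < r')%nat -> (j < r2')%nat -> V (M + a)%nat (r1 + j)%nat = 0).

Definition unique_canonical_basis (n m1 m2 r1 r2 r : nat) (U : mat) : Prop :=
  exists V : mat,
    (structured_basis n m1 m2 r1 r2 r U V /\ canonical_pattern r1 r2 r V) /\
    forall W : mat,
      structured_basis n m1 m2 r1 r2 r U W /\ canonical_pattern r1 r2 r W ->
      forall i j, (i < n)%nat -> (j < r)%nat -> W i j = V i j.

(* Lebesgue-null subsets of R^N (sets of x : nat -> R depending on the
   coordinates x 0, ..., x (N-1)): for every eps > 0 there is a countable
   family of closed boxes covering E with total volume <= eps. *)
Definition null_set (N : nat) (E : (nat -> R) -> Prop) : Prop :=
  forall eps : R, 0 < eps ->
  exists a b : nat -> nat -> R,
    (forall k i, a k i <= b k i) /\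
    (forall x, E x -> exists k, forall i, (i < N)%nat -> a k i <= x i <= b k i) /\
    (forall K, sumR K (fun k => prodR N (fun i => b k i - a k i)) <= eps).

(* Natural (polynomial, surjective, submersive) parametrization of the set of
   matrices U = [U1|U2] with rank U1 = r1, rank U2 = r2, rank U = r:
   parameters W (n x r), G1 (r1 x m1), G2 (r2 x m2), flattened into R^N, and
     U1 = W(:, 0..r1-1) G1,   U2 = W(:, r1'..r-1) G2.
   "Almost every U" = outside a set whose preimage under this map is
   Lebesgue-null. *)
Definition param_dim (n m1 m2 r1 r2 r : nat) : nat :=
  (n * r + r1 * m1 + r2 * m2)%nat.

Definition param_U (n m1 m2 r1 r2 r : nat) (x : nat -> R) : mat :=
  let r1' := (r - r2)%nat in
  let W := fun i k => x (i * r + k)%nat in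
  let G1 := fun a b => x (n * r + a * m1 + b)%nat in
  let G2 := fun a b => x (n * r + r1 * m1 + a * m2 + b)%nat in
  fun i j =>
    if Nat.ltb j m1 then sumR r1 (fun k => W i k * G1 k j)
    else sumR r2 (fun k => W i (r1' + k)%nat * G2 k (j - m1)%nat).

(* Main.v *)
Require Import Defs.
From Stdlib Require Import Reals Arith Lia Lra.
From Stdlib Require Import ClassicalEpsilon Classical FunctionalExtensionality.
Open Scope R_scope.


Lemma sumR_ext k f g : (forall i, (i < k)%nat -> f i = g i) -> sumR k f = sumR k g.
Proof. induction k; simpl; intros; [reflexivity|]. rewrite IHk by (intros; apply H; lia). rewrite H by lia; reflexivity. Qed.

Lemma sumR_le k f g : (forall i, (i < k)%nat -> f i <= g i) -> sumR k f <= sumR k g.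
Proof. induction k; simpl; intros; [lra|]. assert (sumR k f <= sumR k g) by (apply IHk; intros; apply H; lia). assert (f k <= g k) by (apply H; lia). lra. Qed.

Lemma sumR_nonneg k f : (forall i, (i < k)%nat -> 0 <= f i) -> 0 <= sumR k f.
Proof. intros. replace 0 with (sumR k (fun _ => 0)). apply sumR_le; auto. induction k; simpl; [reflexivity|]. rewrite IHk; [lra|intros; apply H; lia]. Qed.

Lemma sumR_zero k f : (forall i, (i < k)%nat -> f i = 0) -> sumR k f = 0.
Proof. induction k; simpl; intros; [reflexivity|]. rewrite IHk by (intros; apply H; lia). rewrite H by lia; lra. Qed.

Lemma sumR_add a b f : sumR (a + b) f = sumR a f + sumR b (fun i => f (a + i)%nat).
Proof. induction b; simpl. rewrite Nat.add_0_r; lra. rewrite Nat.add_succ_r. simpl. rewrite IHb. lra. Qed.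

Lemma sumR_mono k1 k2 f : (k1 <= k2)%nat -> (forall i, 0 <= f i) -> sumR k1 f <= sumR k2 f.
Proof. intros. replace k2 with (k1 + (k2 - k1))%nat by lia. rewrite sumR_add.
 assert (0 <= sumR (k2 - k1) (fun i => f (k1 + i)%nat)) by (apply sumR_nonneg; auto). lra. Qed.

Lemma sumR_plus k f g : sumR k (fun i => f i + g i) = sumR k f + sumR k g.
Proof. induction k; simpl; [lra|]. rewrite IHk; lra. Qed.

Lemma sumR_minus k f g : sumR k (fun i => f i - g i) = sumR k f - sumR k g.
Proof. induction k; simpl; [lra|]. rewrite IHk; lra. Qed.

Lemma sumR_scal k c f : sumR k (fun i => c * f i) = c * sumR k f.
Proof. induction k; simpl; [lra|]. rewrite IHk; lra. Qed.

Lemma sumR_swap p q f : sumR p (fun i => sumR q (fun j => f i j)) = sumR q (fun j => sumR p (fun i => f i j)).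
Proof. induction p; simpl. symmetry; apply sumR_zero; auto. rewrite IHp. rewrite <- sumR_plus. reflexivity. Qed.

Lemma sumR_const k c : sumR k (fun _ => c) = INR k * c.
Proof. induction k; simpl sumR. simpl; lra. rewrite IHk, S_INR; lra. Qed.

Lemma sumR_delta k i c : (i < k)%nat -> sumR k (fun j => c j * kdelta i j) = c i.
Proof. induction k; intros; [lia|]. simpl. destruct (Nat.eq_dec i k).
 - subst. rewrite sumR_zero. unfold kdelta; rewrite Nat.eqb_refl; lra.
   intros j Hj; unfold kdelta; destruct (Nat.eqb_spec k j); [lia|lra].
 - rewrite IHk by lia. unfold kdelta; destruct (Nat.eqb_spec i k); [lia|lra]. Qed.

Lemma sumR_delta' k i c : (i < k)%nat -> sumR k (fun j => kdelta i j * c j) = c i.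
Proof. intros. rewrite <- (sumR_delta k i c H). apply sumR_ext; intros; lra. Qed.

Lemma prodR_ext k f g : (forall i, (i < k)%nat -> f i = g i) -> prodR k f = prodR k g.
Proof. induction k; simpl; intros; [reflexivity|]. rewrite IHk by (intros; apply H; lia). rewrite H by lia; reflexivity. Qed.

Lemma prodR_nonneg k f : (forall i, (i < k)%nat -> 0 <= f i) -> 0 <= prodR k f.
Proof. induction k; simpl; intros; [lra|]. apply Rmult_le_pos; [apply IHk; intros; apply H; lia| apply H; lia]. Qed.

Lemma prodR_zero k f : (1 <= k)%nat -> (forall i, (i < k)%nat -> f i = 0) -> prodR k f = 0.
Proof. destruct k; intros; [lia|]. simpl. rewrite H0 by lia. lra. Qed.

Lemma prodR_special N t h c : (t < N)%nat ->
  prodR N (fun i => if Nat.eqb i t then c else h) = h ^ (N - 1) * c.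
Proof. induction N; intros; [lia|]. simpl prodR. destruct (Nat.eq_dec t N).
 - subst. rewrite Nat.eqb_refl. rewrite (prodR_ext _ _ (fun _ => h)).
   + replace (S N - 1)%nat with N by lia. f_equal. clear. induction N; simpl; [lra|]. rewrite IHN; lra.
   + intros; destruct (Nat.eqb_spec i N); [lia|auto].
 - rewrite IHN by lia. destruct (Nat.eqb_spec N t); [lia|].
   replace (S N - 1)%nat with (S (N - 1)) by lia. simpl; lra. Qed.

Lemma null_sub N (E F : (nat -> R) -> Prop) : (forall x, E x -> F x) -> null_set N F -> null_set N E.
Proof. intros HEF H eps Heps. destruct (H eps Heps) as (a & b & H1 & H2 & H3). exists a, b; repeat split; auto. Qed.

Fixpoint tri (d : nat) : nat := match d with O => O | S d' => (tri d' + S d')%nat end.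

Fixpoint unpair (n : nat) : nat * nat :=
  match n with
  | O => (O, O)
  | S n' => let (k, j) := unpair n' in
            match j with O => (O, S k) | S j' => (S k, j') end
  end.

Lemma unpair_tri d k : (k <= d)%nat -> unpair (tri d + k) = (k, d - k)%nat.
Proof. revert k; induction d; intros k H.
 - assert (k = 0%nat) by lia; subst; reflexivity.
 - induction k.
   + change (tri (S d)) with (tri d + S d)%nat. replace (tri d + S d + 0)%nat with (S (tri d + d)) by lia. cbn [unpair].
     rewrite (IHd d) by lia. replace (d - d)%nat with O by lia. f_equal; lia.
   + replace (tri (S d) + S k)%nat with (S (tri (S d) + k)) by lia. cbn [unpair].
     rewrite IHk by lia. destruct (S d - k)%nat eqn:E; [lia|]. f_equal; lia. Qed.

Lemma tri_ge d : (d <= tri d)%nat.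
Proof. induction d; simpl; lia. Qed.

Lemma sum_tri M g :
  sumR (tri M) (fun n => let (k, j) := unpair n in g k j) =
  sumR M (fun k => sumR (M - k) (fun j => g k j)).
Proof. induction M.
 - reflexivity.
 - simpl tri. rewrite sumR_add. rewrite IHM.
   rewrite (sumR_ext (S M) (fun i => let (k, j) := unpair (tri M + i) in g k j) (fun i => g i (M - i)%nat)).
   2:{ intros. rewrite unpair_tri by lia. reflexivity. }
   assert (E1 : sumR (S M) (fun k => sumR (S M - k) (fun j => g k j)) =
      sumR M (fun k => sumR (M - k) (fun j => g k j) + g k (M - k)%nat) + g M O).
   { change (sumR (S M) (fun k => sumR (S M - k) (fun j => g k j))) with
       (sumR M (fun k => sumR (S M - k) (fun j => g k j)) + sumR (S M - M) (fun j => g M j)).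
     replace (S M - M)%nat with 1%nat by lia. f_equal.
     - apply sumR_ext. intros. replace (S M - i)%nat with (S (M - i)) by lia. reflexivity.
     - simpl. lra. }
   rewrite E1, sumR_plus. change (sumR (S M) (fun i => g i (M - i)%nat)) with (sumR M (fun i => g i (M - i)%nat) + g M (M - M)%nat). replace (M - M)%nat with O by lia. lra. Qed.

Lemma geom_sum eps M : sumR M (fun k => eps / 2 ^ S k) = eps - eps / 2 ^ M.
Proof. induction M. simpl; field.
 change (sumR (S M) (fun k => eps / 2 ^ S k)) with (sumR M (fun k => eps / 2 ^ S k) + eps / 2 ^ S M).
 rewrite IHM. simpl. field. apply pow_nonzero; lra. Qed.

Lemma null_union N (E : nat -> (nat -> R) -> Prop) :
  (forall k, null_set N (E k)) -> null_set N (fun x => exists k, E k x).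
Proof.
  intros H eps Heps.
  assert (X : forall k, {ab : (nat -> nat -> R) * (nat -> nat -> R) |
     (forall j i, fst ab j i <= snd ab j i) /\
     (forall x, E k x -> exists j, forall i, (i < N)%nat -> fst ab j i <= x i <= snd ab j i) /\
     (forall K, sumR K (fun j => prodR N (fun i => snd ab j i - fst ab j i)) <= eps / 2 ^ S k)}).
  { intro k. apply constructive_indefinite_description.
    assert (0 < eps / 2 ^ S k) by (apply Rdiv_lt_0_compat; [lra| apply pow_lt; lra]).
    destruct (H k _ H0) as (a & b & H1 & H2 & H3). exists (a, b); simpl; auto. }
  exists (fun n i => let (k, j) := unpair n in fst (proj1_sig (X k)) j i).
  exists (fun n i => let (k, j) := unpair n in snd (proj1_sig (X k)) j i).
  split; [|split].
  - intros n i. destruct (unpair n) as [k j]. destruct (proj2_sig (X k)) as (H1 & _). apply H1.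
  - intros x [k Hk]. destruct (proj2_sig (X k)) as (_ & H2 & _). destruct (H2 x Hk) as [j Hj].
    exists (tri (k + j) + k)%nat. rewrite unpair_tri by lia. replace (k + j - k)%nat with j by lia. exact Hj.
  - intro K.
    set (g := fun k j => prodR N (fun i => snd (proj1_sig (X k)) j i - fst (proj1_sig (X k)) j i)).
    assert (Hg : forall k j, 0 <= g k j).
    { intros. unfold g. apply prodR_nonneg. intros. destruct (proj2_sig (X k)) as (H1 & _). specialize (H1 j i). lra. }
    apply Rle_trans with (sumR (tri K) (fun n => let (k, j) := unpair n in g k j)).
    + replace (fun n => prodR N (fun i => (let (k, j) := unpair n in snd (proj1_sig (X k)) j i) -
                              (let (k, j) := unpair n in fst (proj1_sig (X k)) j i)))
        with (fun n => let (k, j) := unpair n in g k j).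
      2:{ apply functional_extensionality; intro n; unfold g; destruct (unpair n); reflexivity. }
      apply sumR_mono. apply tri_ge. intros n; destruct (unpair n); auto.
    + rewrite sum_tri. apply Rle_trans with (sumR K (fun k => eps / 2 ^ S k)).
      * apply sumR_le. intros k Hk. destruct (proj2_sig (X k)) as (_ & _ & H3). apply H3.
      * rewrite geom_sum. assert (0 < eps / 2 ^ K) by (apply Rdiv_lt_0_compat; [lra| apply pow_lt; lra]). lra.
Qed.


Definition upd (x : nat -> R) (t : nat) (u : R) : nat -> R :=
  fun i => if Nat.eqb i t then u else x i.
Definition indep (t : nat) (F : (nat -> R) -> R) : Prop := forall x u, F (upd x t u) = F x.
Definition LL (N : nat) (F : (nat -> R) -> R) : Prop :=
  forall m, 0 <= m -> exists L B, 0 <= L /\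
    forall x y h, 0 <= h ->
      (forall i, (i < N)%nat -> Rabs (x i) <= m /\ Rabs (y i) <= m /\ Rabs (x i - y i) <= h) ->
      Rabs (F x) <= B /\ Rabs (F x - F y) <= L * h.

Fixpoint dig (K n j : nat) : nat :=
  match j with O => (n mod K)%nat | S j' => dig K (n / K) j' end.
Fixpoint enc (K : nat) (g : nat -> nat) (D : nat) : nat :=
  match D with O => O | S D' => (g O + K * enc K (fun j => g (S j)) D')%nat end.

Lemma enc_spec K D : forall g, (forall j, (j < D)%nat -> (g j < K)%nat) ->
  (enc K g D < K ^ D)%nat /\ forall j, (j < D)%nat -> dig K (enc K g D) j = g j.
Proof. induction D; intros g Hg.
 - simpl. split; [lia| intros; lia].
 - destruct (IHD (fun j => g (S j))) as [H1 H2]. { intros; apply Hg; lia. }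
   assert (g O < K)%nat by (apply Hg; lia).
   simpl enc. split.
   + simpl. nia.
   + intros j Hj. destruct j.
     * simpl. symmetry. apply (Nat.mod_unique _ _ (enc K (fun j => g (S j)) D)); lia.
     * simpl. replace ((g 0%nat + K * enc K (fun j0 => g (S j0)) D) / K)%nat with (enc K (fun j => g (S j)) D).
       apply H2; lia. apply (Nat.div_unique _ _ _ (g O)); lia.
Qed.

Definition skip (t i : nat) : nat := if Nat.ltb i t then i else (i - 1)%nat.
Definition unskip (t j : nat) : nat := if Nat.ltb j t then j else S j.

Lemma skip_lt N t i : (t < N)%nat -> (i < N)%nat -> i <> t -> (skip t i < N - 1)%nat.
Proof. unfold skip; intros; destruct (Nat.ltb_spec i t); lia. Qed.
Lemma unskip_skip t i : i <> t -> unskip t (skip t i) = i.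
Proof. unfold skip, unskip; intros; destruct (Nat.ltb_spec i t); destruct (Nat.ltb_spec (i-1) t);
  destruct (Nat.ltb_spec i t); lia. Qed.

Definition pickopt (P : (nat -> R) -> Prop) : option (nat -> R) :=
  match excluded_middle_informative (exists y, P y) with
  | left H => Some (proj1_sig (constructive_indefinite_description _ H))
  | right _ => None
  end.
Lemma pickopt_some P y : pickopt P = Some y -> P y.
Proof. unfold pickopt. destruct (excluded_middle_informative _); intro E; inversion E.
  exact (proj2_sig (constructive_indefinite_description _ e)). Qed.
Lemma pickopt_none P : pickopt P = None -> forall y, ~ P y.
Proof. unfold pickopt. destruct (excluded_middle_informative _); intro E; inversion E.
  intros y Hy; apply n; exists y; auto. Qed.

Lemma bound_exists N (x : nat -> R) : exists m : nat, forall i, (i < N)%nat -> Rabs (x i) <= INR m.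
Proof. induction N.
 - exists O; intros; lia.
 - destruct IHN as [m0 Hm0]. destruct (INR_unbounded (Rabs (x N))) as [m1 Hm1].
   exists (Nat.max m0 m1). intros i Hi. destruct (Nat.eq_dec i N).
   + subst. apply Rle_trans with (INR m1); [lra| apply le_INR; lia].
   + apply Rle_trans with (INR m0); [apply Hm0; lia| apply le_INR; lia].
Qed.

Lemma Rabs_le_inv a b : Rabs a <= b -> - b <= a <= b.
Proof. unfold Rabs; destruct (Rcase_abs a); lra. Qed.

Lemma cell_core K h : (1 <= K)%nat -> 0 <= h -> forall w, 0 <= w <= INR K * h ->
  exists g, (g < K)%nat /\ INR g * h <= w <= INR g * h + h.
Proof. induction K; intros HK Hh w Hw; [lia|].
 destruct (Nat.eq_dec K 0).
 - subst. exists O. simpl in *. split; [lia| lra].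
 - destruct (Rle_dec w (INR K * h)).
   + destruct (IHK ltac:(lia) Hh w ltac:(lra)) as [g [Hg1 Hg2]]. exists g; split; [lia|lra].
   + exists K. rewrite S_INR in Hw. split; [lia| lra].
Qed.

Lemma cell_exists K h m z : (1 <= K)%nat -> 0 <= h -> INR K * h = 2 * m ->
  exists g, (g < K)%nat /\ (Rabs z <= m -> -m + INR g * h <= z <= -m + INR g * h + h).
Proof. intros HK Hh HKh. destruct (classic (Rabs z <= m)).
 - destruct (cell_core K h HK Hh (z + m)) as [g [Hg1 Hg2]].
   { apply Rabs_le_inv in H. lra. }
   exists g; split; auto; intros; lra.
 - exists O; split; [lia| intros; contradiction]. Qed.

Lemma sum_trunc_bound (f : nat -> R) K' c : 0 <= c -> (forall n, (n < K')%nat -> f n <= c) ->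
  (forall n, (K' <= n)%nat -> f n = 0) -> forall Kb, sumR Kb f <= INR K' * c.
Proof. intros Hc H1 H2 Kb. apply Rle_trans with (INR (Nat.min Kb K') * c).
 - induction Kb. simpl; lra. simpl sumR. destruct (Nat.lt_ge_cases Kb K').
   + replace (Nat.min (S Kb) K') with (S (Nat.min Kb K')) by lia. rewrite S_INR.
     specialize (H1 Kb H). lra.
   + replace (Nat.min (S Kb) K') with (Nat.min Kb K') by lia. rewrite H2 by lia. lra.
 - apply Rmult_le_compat_r; auto. apply le_INR; lia. Qed.

Definition Gm N t C Rr (mR : R) (x : nat -> R) : Prop :=
  (forall i, (i < N)%nat -> i <> t -> Rabs (x i) <= mR) /\ / (mR + 1) <= Rabs (C x) /\ x t * C x + Rr x = 0.

Lemma key_est N t C Rr mR LC BC LR BR : 0 <= mR -> (t < N)%nat ->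
  indep t C -> indep t Rr ->
  (forall x y h, 0 <= h ->
      (forall i, (i < N)%nat -> Rabs (x i) <= mR /\ Rabs (y i) <= mR /\ Rabs (x i - y i) <= h) ->
      Rabs (C x) <= BC /\ Rabs (C x - C y) <= LC * h) ->
  (forall x y h, 0 <= h ->
      (forall i, (i < N)%nat -> Rabs (x i) <= mR /\ Rabs (y i) <= mR /\ Rabs (x i - y i) <= h) ->
      Rabs (Rr x) <= BR /\ Rabs (Rr x - Rr y) <= LR * h) ->
  forall x y h, 0 <= h -> Gm N t C Rr mR x -> Gm N t C Rr mR y ->
    (forall i, (i < N)%nat -> i <> t -> Rabs (x i - y i) <= h) ->
    Rabs (x t - y t) <= (mR + 1) ^ 2 * (Rabs BR * LC + Rabs BC * LR) * h.
Proof.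
  intros HmR Ht HiC HiR HC HR x y h Hh [Gx1 [Gx2 Gx3]] [Gy1 [Gy2 Gy3]] Hxy.
  set (x0 := upd x t 0). set (y0 := upd y t 0).
  assert (Hbox : forall i, (i < N)%nat -> Rabs (y0 i) <= mR /\ Rabs (x0 i) <= mR /\ Rabs (y0 i - x0 i) <= h).
  { intros i Hi. unfold x0, y0, upd. destruct (Nat.eqb_spec i t).
    - rewrite Rminus_0_r, Rabs_R0. lra.
    - rewrite Rabs_minus_sym. repeat split; auto. }
  destruct (HC y0 x0 h Hh Hbox) as [C1 C2]. destruct (HR y0 x0 h Hh Hbox) as [R1 R2].
  unfold x0, y0 in *. rewrite (HiC x 0), (HiC y 0) in C2. rewrite (HiC y 0) in C1. rewrite (HiR x 0), (HiR y 0) in R2. rewrite (HiR y 0) in R1.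
  set (cx := C x) in *. set (cy := C y) in *. set (rx := Rr x) in *. set (ry := Rr y) in *.
  assert (Heq : (x t - y t) * cx * cy = ry * (cx - cy) + cy * (ry - rx)).
  { replace rx with (- (x t * cx)) by lra. replace ry with (- (y t * cy)) by lra. ring. }
  assert (Hnum : Rabs (ry * (cx - cy) + cy * (ry - rx)) <= (Rabs BR * LC + Rabs BC * LR) * h).
  { eapply Rle_trans. apply Rabs_triang. rewrite !Rabs_mult.
    assert (Rabs ry <= Rabs BR) by (eapply Rle_trans; [exact R1| apply Rle_abs]).
    assert (Rabs cy <= Rabs BC) by (eapply Rle_trans; [exact C1| apply Rle_abs]).
    assert (Rabs (cx - cy) <= LC * h) by (rewrite Rabs_minus_sym; exact C2).
    assert (Rabs (ry - rx) <= LR * h) by exact R2.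
    assert (0 <= Rabs ry) by apply Rabs_pos. assert (0 <= Rabs cy) by apply Rabs_pos.
    assert (0 <= Rabs (cx - cy)) by apply Rabs_pos. assert (0 <= Rabs (ry - rx)) by apply Rabs_pos.
    assert (Rabs ry * Rabs (cx - cy) <= Rabs BR * (LC * h)) by (apply Rmult_le_compat; auto).
    assert (Rabs cy * Rabs (ry - rx) <= Rabs BC * (LR * h)) by (apply Rmult_le_compat; auto).
    lra. }
  rewrite <- Heq in Hnum. rewrite !Rabs_mult in Hnum.
  set (d := Rabs (x t - y t)) in *. set (S := (Rabs BR * LC + Rabs BC * LR) * h) in *.
  assert (0 <= d) by apply Rabs_pos.
  set (e := / (mR + 1)) in *.
  assert (He : e * (mR + 1) = 1) by (unfold e; field; lra).
  assert (0 < e) by (unfold e; apply Rinv_0_lt_compat; lra).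
  assert (d * e * e <= S).
  { apply Rle_trans with (d * Rabs cx * Rabs cy); auto.
    apply Rmult_le_compat; auto; [nra| lra| apply Rmult_le_compat_l; auto]. }
  replace ((mR + 1) ^ 2 * (Rabs BR * LC + Rabs BC * LR) * h) with ((mR + 1) ^ 2 * S) by (unfold S; ring).
  replace d with (d * e * e * (mR + 1) ^ 2) by (simpl; replace (d * e * e * ((mR + 1) * ((mR + 1) * 1))) with (d * (e * (mR+1)) * (e * (mR + 1))) by ring; rewrite He; ring).
  assert (0 <= (mR + 1) ^ 2) by (apply pow_le; lra).
  nra.
Qed.

Lemma Gm_null N t C Rr (m : nat) : (t < N)%nat -> LL N C -> LL N Rr -> indep t C -> indep t Rr ->
  null_set N (Gm N t C Rr (INR m)).
Proof.
  intros Ht HC HR HiC HiR eps Heps.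
  set (mR := INR m). assert (HmR : 0 <= mR) by apply pos_INR.
  destruct (HC mR HmR) as (LC & BC & HLC & HC').
  destruct (HR mR HmR) as (LR & BR & HLR & HR').
  set (Lam := (mR + 1) ^ 2 * (Rabs BR * LC + Rabs BC * LR)).
  assert (HLam : 0 <= Lam).
  { unfold Lam. apply Rmult_le_pos. apply pow_le; lra.
    assert (0 <= Rabs BR) by apply Rabs_pos. assert (0 <= Rabs BC) by apply Rabs_pos.
    assert (0 <= Rabs BR * LC) by (apply Rmult_le_pos; auto).
    assert (0 <= Rabs BC * LR) by (apply Rmult_le_pos; auto). lra. }
  pose proof (key_est N t C Rr mR LC BC LR BR HmR Ht HiC HiR HC' HR') as Hkey.
  fold Lam in Hkey.
  set (D := (N - 1)%nat).
  set (c0 := (2 * mR) ^ D * (2 * Lam) * (2 * mR)).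
  assert (Hc0 : 0 <= c0).
  { unfold c0. apply Rmult_le_pos; [apply Rmult_le_pos|]; [apply pow_le| |]; lra. }
  destruct (INR_unbounded (c0 / eps)) as [K0 HK0].
  set (K := S K0).
  assert (HK : 0 < INR K) by (unfold K; rewrite S_INR; pose proof (pos_INR K0); lra).
  assert (HKc : c0 <= eps * INR K).
  { assert (INR K0 <= INR K) by (apply le_INR; unfold K; lia).
    assert (c0 / eps * eps = c0) by (field; lra).
    assert (c0 / eps * eps <= INR K * eps) by (apply Rmult_le_compat_r; lra). lra. }
  set (h := 2 * mR / INR K).
  assert (Hh : 0 <= h) by (unfold h; unfold Rdiv; apply Rmult_le_pos; [lra| left; apply Rinv_0_lt_compat; lra]).
  assert (HKh : INR K * h = 2 * mR) by (unfold h; field; lra).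
  set (lo := fun n i => - mR + INR (dig K n (skip t i)) * h).
  set (Q := fun n (y : nat -> R) => forall i, (i < N)%nat -> i <> t -> lo n i <= y i <= lo n i + h).
  set (pk := fun n => pickopt (fun y => Q n y /\ Gm N t C Rr mR y)).
  exists (fun n i => if Nat.ltb n (K ^ D) then
             match pk n with Some y => if Nat.eqb i t then y t - Lam * h else lo n i | None => 0 end
           else 0).
  exists (fun n i => if Nat.ltb n (K ^ D) then
             match pk n with Some y => if Nat.eqb i t then y t + Lam * h else lo n i + h | None => 0 end
           else 0).
  split; [|split].
  - intros n i. destruct (Nat.ltb n (K ^ D)); [|lra]. destruct (pk n); [|lra].
    destruct (Nat.eqb i t).
    + assert (0 <= Lam * h) by (apply Rmult_le_pos; auto). lra.
    + lra.
  - intros x Hx.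
    assert (Hcell : forall j, exists g, (g < K)%nat /\
       (Rabs (x (unskip t j)) <= mR -> - mR + INR g * h <= x (unskip t j) <= - mR + INR g * h + h)).
    { intro j. apply cell_exists; auto. unfold K; lia. }
    set (g := fun j => proj1_sig (constructive_indefinite_description _ (Hcell j))).
    assert (Hg : forall j, (g j < K)%nat /\
       (Rabs (x (unskip t j)) <= mR -> - mR + INR (g j) * h <= x (unskip t j) <= - mR + INR (g j) * h + h)).
    { intro j. exact (proj2_sig (constructive_indefinite_description _ (Hcell j))). }
    destruct (enc_spec K D g) as [Hlt Hdig]. { intros; apply Hg. }
    set (n := enc K g D).
    assert (HQx : Q n x).
    { intros i Hi Hit. unfold lo. fold n. rewrite Hdig by (apply skip_lt; auto).
      destruct (Hg (skip t i)) as [_ Hg2]. rewrite unskip_skip in Hg2 by auto.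
      apply Hg2. destruct Hx as [Hx1 _]. apply Hx1; auto. }
    exists n. intros i Hi.
    assert (E : Nat.ltb n (K ^ D) = true) by (apply Nat.ltb_lt; exact Hlt). rewrite E.
    destruct (pk n) as [y|] eqn:Ep.
    + apply pickopt_some in Ep. destruct Ep as [HQy HGy].
      destruct (Nat.eqb_spec i t).
      * subst i. assert (Rabs (x t - y t) <= Lam * h).
        { apply Hkey; auto. intros i Hi' Hit. specialize (HQx i Hi' Hit). specialize (HQy i Hi' Hit).
          apply Rabs_le. lra. }
        apply Rabs_le_inv in H. lra.
      * apply HQx; auto.
    + exfalso. apply (pickopt_none _ Ep x). split; auto.
  - intro Kb.
    set (c := h ^ D * (2 * Lam * h)).
    assert (Hc : 0 <= c) by (unfold c; apply Rmult_le_pos; [apply pow_le; auto| apply Rmult_le_pos; lra]).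
    apply Rle_trans with (INR (K ^ D) * c).
    + apply sum_trunc_bound; auto.
      * intros n0 Hn0. assert (E : Nat.ltb n0 (K ^ D) = true) by (apply Nat.ltb_lt; exact Hn0).
        rewrite E. destruct (pk n0).
        -- right. rewrite (prodR_ext _ _ (fun i => if Nat.eqb i t then 2 * Lam * h else h)).
           ++ unfold c, D. apply prodR_special; auto.
           ++ intros i Hi. destruct (Nat.eqb i t); ring.
        -- rewrite prodR_zero by (lia || (intros; ring)). exact Hc.
      * intros n0 Hn0. assert (E : Nat.ltb n0 (K ^ D) = false) by (apply Nat.ltb_ge; exact Hn0).
        rewrite E. apply prodR_zero; [lia| intros; ring].
    + unfold c. rewrite pow_INR.
      replace (INR K ^ D * (h ^ D * (2 * Lam * h))) with ((INR K * h) ^ D * (2 * Lam * h))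
        by (rewrite Rpow_mult_distr; ring).
      rewrite HKh. unfold h.
      replace ((2 * mR) ^ D * (2 * Lam * (2 * mR / INR K))) with (c0 / INR K) by (unfold c0; field; lra).
      apply Rmult_le_reg_r with (INR K); auto.
      replace (c0 / INR K * INR K) with c0 by (field; lra). lra.
Qed.

Lemma graph_null N t C Rr : (t < N)%nat -> LL N C -> LL N Rr -> indep t C -> indep t Rr ->
  null_set N (fun x => C x <> 0 /\ x t * C x + Rr x = 0).
Proof.
  intros Ht HC HR HiC HiR.
  apply null_sub with (fun x => exists m, Gm N t C Rr (INR m) x).
  2:{ apply null_union. intro m. apply Gm_null; auto. }
  intros x [Hc Heq].
  destruct (bound_exists N x) as [m1 Hm1].
  assert (Hcp : 0 < Rabs (C x)) by (apply Rabs_pos_lt; auto).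
  destruct (INR_unbounded (/ Rabs (C x))) as [m2 Hm2].
  exists (Nat.max m1 m2). split; [|split]; auto.
  - intros i Hi _. apply Rle_trans with (INR m1); auto. apply le_INR; lia.
  - assert (INR m2 <= INR (Nat.max m1 m2)) by (apply le_INR; lia).
    set (M := INR (Nat.max m1 m2)) in *.
    assert (0 < M + 1) by (pose proof (pos_INR (Nat.max m1 m2)); unfold M; lra).
    apply Rmult_le_reg_l with (M + 1); auto.
    rewrite Rinv_r by lra.
    apply Rmult_le_reg_r with (/ Rabs (C x)). apply Rinv_0_lt_compat; auto.
    rewrite Rmult_assoc, Rinv_r by lra. lra.
Qed.

Lemma null_empty N (E : (nat -> R) -> Prop) : (1 <= N)%nat -> (forall x, ~ E x) -> null_set N E.
Proof. intros HN HE eps Heps. exists (fun _ _ => 0), (fun _ _ => 0). split; [|split].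
 - intros; lra.
 - intros x Hx; exfalso; apply (HE x Hx).
 - intro K. rewrite sumR_zero. lra. intros. apply prodR_zero; auto. intros; ring. Qed.

Lemma LL_ext N F G : (forall x, F x = G x) -> LL N F -> LL N G.
Proof. intros E H m Hm. destruct (H m Hm) as (L & B & HL & H'). exists L, B; split; auto.
  intros. rewrite <- !E. auto. Qed.

Lemma LL_const N c : LL N (fun _ => c).
Proof. intros m Hm. exists 0, (Rabs c). split; [lra|]. intros. split; [lra|].
  replace (c - c) with 0 by ring. rewrite Rabs_R0. lra. Qed.

Lemma LL_coord N i : (i < N)%nat -> LL N (fun x => x i).
Proof. intros Hi m Hm. exists 1, m. split; [lra|]. intros x y h Hh H. destruct (H i Hi) as (H1 & H2 & H3).
  split; lra. Qed.

Lemma LL_plus N F G : LL N F -> LL N G -> LL N (fun x => F x + G x).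
Proof. intros HF HG m Hm. destruct (HF m Hm) as (L1 & B1 & HL1 & H1). destruct (HG m Hm) as (L2 & B2 & HL2 & H2).
  exists (L1 + L2), (B1 + B2). split; [lra|]. intros x y h Hh H.
  destruct (H1 x y h Hh H) as [A1 A2]. destruct (H2 x y h Hh H) as [A3 A4]. split.
  - eapply Rle_trans; [apply Rabs_triang| lra].
  - replace (F x + G x - (F y + G y)) with ((F x - F y) + (G x - G y)) by ring.
    eapply Rle_trans; [apply Rabs_triang| lra]. Qed.

Lemma LL_opp N F : LL N F -> LL N (fun x => - F x).
Proof. intros HF m Hm. destruct (HF m Hm) as (L1 & B1 & HL1 & H1). exists L1, B1. split; auto.
  intros x y h Hh H. destruct (H1 x y h Hh H) as [A1 A2]. rewrite Rabs_Ropp. split; auto.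
  replace (- F x - - F y) with (- (F x - F y)) by ring. rewrite Rabs_Ropp; auto. Qed.

Lemma LL_mult N F G : LL N F -> LL N G -> LL N (fun x => F x * G x).
Proof. intros HF HG m Hm. destruct (HF m Hm) as (L1 & B1 & HL1 & H1). destruct (HG m Hm) as (L2 & B2 & HL2 & H2).
  exists (Rabs B1 * L2 + Rabs B2 * L1), (Rabs B1 * Rabs B2). split.
  { assert (0 <= Rabs B1) by apply Rabs_pos. assert (0 <= Rabs B2) by apply Rabs_pos.
    assert (0 <= Rabs B1 * L2) by (apply Rmult_le_pos; auto). assert (0 <= Rabs B2 * L1) by (apply Rmult_le_pos; auto). lra. }
  intros x y h Hh H.
  assert (Hy : forall i, (i < N)%nat -> Rabs (y i) <= m /\ Rabs (x i) <= m /\ Rabs (y i - x i) <= h).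
  { intros i Hi. destruct (H i Hi) as (a & b & c). rewrite Rabs_minus_sym. auto. }
  destruct (H1 x y h Hh H) as [A1 A2]. destruct (H2 x y h Hh H) as [A3 A4].
  destruct (H2 y x h Hh Hy) as [A5 _].
  assert (Rabs (F x) <= Rabs B1) by (eapply Rle_trans; [exact A1| apply Rle_abs]).
  assert (Rabs (G x) <= Rabs B2) by (eapply Rle_trans; [exact A3| apply Rle_abs]).
  assert (Rabs (G y) <= Rabs B2) by (eapply Rle_trans; [exact A5| apply Rle_abs]).
  pose proof (Rabs_pos (F x)). pose proof (Rabs_pos (G x)). pose proof (Rabs_pos (G y)).
  pose proof (Rabs_pos (F x - F y)). pose proof (Rabs_pos (G x - G y)).
  split.
  - rewrite Rabs_mult. apply Rmult_le_compat; auto.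
  - replace (F x * G x - F y * G y) with (F x * (G x - G y) + G y * (F x - F y)) by ring.
    eapply Rle_trans; [apply Rabs_triang|]. rewrite !Rabs_mult.
    assert (Rabs (F x) * Rabs (G x - G y) <= Rabs B1 * (L2 * h)) by (apply Rmult_le_compat; auto).
    assert (Rabs (G y) * Rabs (F x - F y) <= Rabs B2 * (L1 * h)) by (apply Rmult_le_compat; auto).
    lra. Qed.


Module MC.
From mathcomp Require Import all_boot all_algebra fingroup perm.
From mathcomp Require Import Rstruct.
Import GRing.Theory.

Lemma sumR_big k f : sumR k f = (\sum_(i < k) f i)%R.
Proof. elim: k => [|k IH]; first by rewrite big_ord0. by rewrite big_ord_recr /= -IH. Qed.

Definition mk p q (F : nat -> nat -> R) : 'M[R]_(p, q) := \matrix_(i < p, j < q) F i j.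
Definition mxget {p q} (A : 'M[R]_(p, q)) (i j : nat) : R :=
  match (insub i : option 'I_p), (insub j : option 'I_q) with
  | Some i', Some j' => A i' j'
  | _, _ => 0
  end.

Lemma mxget_ord p q (A : 'M[R]_(p, q)) (i : 'I_p) (j : 'I_q) : mxget A i j = A i j.
Proof. by rewrite /mxget !valK. Qed.
Arguments mxget_ord {p q}.

Lemma mxget_mk p q F i j : (i < p)%coq_nat -> (j < q)%coq_nat -> mxget (mk p q F) i j = F i j.
Proof.
  move=> /ltP Hi /ltP Hj. rewrite /mxget.
  case: insubP => [i' _ Ei|]; last by rewrite Hi.
  case: insubP => [j' _ Ej|]; last by rewrite Hj.
  by rewrite mxE Ei Ej.
Qed.

Definition detf k (e : nat -> nat -> (nat -> R) -> R) (x : nat -> R) : R :=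
  (\det (mk k k (fun a b => e a b x)))%R.

Lemma LL_bigsum N (I : Type) (r : seq I) (P : pred I) (F : I -> (nat -> R) -> R) :
  (forall i, LL N (F i)) -> LL N (fun x => (\sum_(i <- r | P i) F i x)%R).
Proof.
  move=> H. elim: r => [|i r IH].
  - apply: (LL_ext _ (fun _ => 0)); last exact: LL_const. by move=> x; rewrite big_nil.
  - apply: (LL_ext _ (fun x => if P i then F i x + (\sum_(j <- r | P j) F j x)%R else (\sum_(j <- r | P j) F j x)%R)).
    + by move=> x; rewrite big_cons; case: (P i).
    + case: (P i) => //. exact: LL_plus.
Qed.

Lemma LL_bigprod N (I : Type) (r : seq I) (P : pred I) (F : I -> (nat -> R) -> R) :
  (forall i, LL N (F i)) -> LL N (fun x => (\prod_(i <- r | P i) F i x)%R).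
Proof.
  move=> H. elim: r => [|i r IH].
  - apply: (LL_ext _ (fun _ => 1)); last exact: LL_const. by move=> x; rewrite big_nil.
  - apply: (LL_ext _ (fun x => if P i then F i x * (\prod_(j <- r | P j) F j x)%R else (\prod_(j <- r | P j) F j x)%R)).
    + by move=> x; rewrite big_cons; case: (P i).
    + case: (P i) => //. exact: LL_mult.
Qed.

Lemma LL_det N k e : (forall a b, LL N (e a b)) -> LL N (detf k e).
Proof.
  move=> H. rewrite /detf /determinant.
  apply: LL_bigsum => s. apply: LL_mult; first exact: LL_const.
  have HP : LL N (fun x => (\prod_(i < k) e i ((s : 'S_k) i) x)%R) by apply: LL_bigprod.
  apply: (LL_ext _ _ _ _ HP). by move=> x; apply: eq_bigr => i _; rewrite mxE.
Qed.

Lemma det_indep k e x y : (forall a b, (a < k)%coq_nat -> (b < k)%coq_nat -> e a b x = e a b y) ->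
  detf k e x = detf k e y.
Proof.
  move=> H. rewrite /detf. congr (\det _)%R. apply/matrixP => a b. rewrite !mxE.
  by apply: H; apply/ltP.
Qed.

Lemma det_affine k e x :
  detf (S k) e x = e O O x * detf k (fun a b => e (S a) (S b)) x +
     detf (S k) (fun a b => if (Nat.eqb a 0 && Nat.eqb b 0)%bool then (fun _ => 0) else e a b) x.
Proof.
  rewrite RplusE RmultE /detf !(expand_det_row _ ord0) !big_ord_recl.
  set A := mk k.+1 k.+1 (fun a b => e a b x).
  set A' := mk k.+1 k.+1 (fun a b => (if (Nat.eqb a 0 && Nat.eqb b 0)%bool then (fun _ => 0) else e a b) x).
  have Hcof : forall j, cofactor A ord0 j = cofactor A' ord0 j.
  { move=> j. rewrite /cofactor. congr (_ * \det _)%R. apply/matrixP => a b. rewrite !mxE /=.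
    done. }
  have HA : forall j, A ord0 (lift ord0 j) = A' ord0 (lift ord0 j).
  { move=> j. by rewrite !mxE lift0. }
  have -> : A' ord0 ord0 = 0%R by rewrite mxE.
  rewrite mul0r add0r. congr (_ + _)%R.
  - rewrite /cofactor addn0 expr0 mul1r. rewrite {1}/A mxE. congr (_ * \det _)%R.
    apply/matrixP => a b. by rewrite !mxE !lift0.
  - apply: eq_bigr => j _. by rewrite HA Hcof.
Qed.


Definition Tm n k (B : mat) : 'M[R]_(k, n) := mk k n (fun j i => B i j).
Definition rowv n (v : vec) : 'M[R]_(1, n) := mk 1 n (fun _ i => v i).

Lemma B1 n k B v : in_colspace n k B v <-> (rowv n v <= Tm n k B)%MS.
Proof.
  split.
  - move=> [c Hc]. apply/submxP. exists (mk 1 k (fun _ j => c j)).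
    apply/matrixP => a i. rewrite !mxE.
    have Hi : (i < n)%coq_nat by apply/ltP.
    rewrite (Hc i Hi) sumR_big. apply: eq_bigr => j _. by rewrite !mxE.
  - move/submxP => [D HD]. exists (fun j => mxget D 0 j). move=> i Hi.
    have Hi' : (i < n)%N by apply/ltP.
    have := congr1 (fun M : 'M_(1, n) => M ord0 (Ordinal Hi')) HD. rewrite !mxE /= => ->.
    rewrite sumR_big. apply: eq_bigr => j _. by rewrite !mxE (mxget_ord D ord0 j).
Qed.

Lemma B2 n k B : lin_indep n k B <-> row_free (Tm n k B).
Proof.
  split.
  - move=> H. apply/negPn/negP => Hnf.
    have : kermx (Tm n k B) != 0%R by rewrite kermx_eq0.
    move/rowV0Pn => [v Hv Hv0]. move: Hv. rewrite sub_kermx => /eqP Hv.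
    have Hc : forall j, (j < k)%coq_nat -> mxget v 0 j = 0.
    { apply: H => i Hi. have Hi' : (i < n)%N by apply/ltP.
      have := congr1 (fun M : 'M_(1, n) => M ord0 (Ordinal Hi')) Hv. rewrite !mxE /= => E.
      rewrite sumR_big -[X in _ = X]E. apply: eq_bigr => j _. by rewrite !mxE (mxget_ord v ord0 j). }
    move/eqP: Hv0; apply. apply/matrixP => a j. rewrite (ord1 a) mxE -(mxget_ord v ord0 j).
    apply: Hc. by apply/ltP.
  - move=> Hf c Hc j Hj.
    set D := mk 1 k (fun _ j => c j).
    have HD : (D *m Tm n k B = 0 *m Tm n k B)%R.
    { rewrite mul0mx. apply/matrixP => a i. rewrite !mxE.
      have Hi : (i < n)%coq_nat by apply/ltP.
      apply: (eq_trans _ (Hc i Hi)). rewrite sumR_big. apply: eq_bigr => l _. by rewrite !mxE. }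
    have := row_free_inj Hf HD. move=> HD0.
    have Hj' : (j < k)%N by apply/ltP.
    have := congr1 (fun M : 'M_(1, k) => M ord0 (Ordinal Hj')) HD0. by rewrite !mxE.
Qed.

Lemma row_Tm n k B (j : 'I_k) : row j (Tm n k B) = rowv n (fun i => B i j).
Proof. apply/matrixP => a i. by rewrite !mxE. Qed.

Lemma B3 n k m B A : (forall j, (j < k)%coq_nat -> in_colspace n m A (fun i => B i j)) <->
  (Tm n k B <= Tm n m A)%MS.
Proof.
  split.
  - move=> H. apply/row_subP => j. rewrite row_Tm. apply/B1. apply: H. by apply/ltP.
  - move=> H j Hj. have Hj' : (j < k)%N by apply/ltP. apply/B1.
    rewrite -(row_Tm n k B (Ordinal Hj')). by move/row_subP: H; apply.
Qed.

Lemma col_in n m A j : (j < m)%coq_nat -> in_colspace n m A (fun i => A i j).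
Proof. move=> Hj. exists (fun l => kdelta j l). move=> i Hi. by rewrite sumR_delta'. Qed.

Lemma G1 n m A k : rank_eq n m A k -> \rank (Tm n m A) = k.
Proof.
  move=> [B [H1 [H2 H3]]].
  have S1 : (Tm n k B <= Tm n m A)%MS by apply/B3.
  have S2 : (Tm n m A <= Tm n k B)%MS by apply/B3 => j Hj; apply: H3; apply: col_in.
  move/B2: H2 => /eqP <-. apply/eqP. by rewrite eqn_leq !mxrankS.
Qed.
Arguments G1 {n m A k}.

Lemma Lcolbasis n k B m A : lin_indep n k B -> (forall j, (j < k)%coq_nat -> in_colspace n m A (fun i => B i j)) ->
  rank_eq n m A k -> is_colbasis n k B m A.
Proof.
  move=> Hi Hc Hr. have Hrk := G1 Hr. split; [exact Hc| split; [exact Hi|]].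
  move=> v Hv. apply/B1. move/B1: Hv => Hv.
  have S1 : (Tm n k B <= Tm n m A)%MS by apply/B3.
  have Hf := Hi. move/B2: Hf => /eqP Hf.
  have S2 : (Tm n m A <= Tm n k B)%MS.
  { by rewrite -(mxrank_leqif_sup S1).2 Hf Hrk. }
  exact: submx_trans Hv S2.
Qed.

Lemma Lfactor n m k X Y G :
  (forall i j, (i < n)%coq_nat -> (j < m)%coq_nat -> X i j = sumR k (fun l => Y i l * G l j)) ->
  rank_eq n m X k -> lin_indep n k Y /\ (forall l, (l < k)%coq_nat -> in_colspace n m X (fun i => Y i l)).
Proof.
  move=> HX Hr. have Hrk := G1 Hr.
  have E : Tm n m X = (mk m k (fun j l => G l j) *m Tm n k Y)%R.
  { apply/matrixP => j i. rewrite !mxE.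
    have Hi : (i < n)%coq_nat by apply/ltP. have Hj : (j < m)%coq_nat by apply/ltP.
    rewrite (HX i j Hi Hj) sumR_big. apply: eq_bigr => l _. by rewrite !mxE mulrC. }
  have S1 : (Tm n m X <= Tm n k Y)%MS by rewrite E submxMl.
  have Rk : \rank (Tm n k Y) = k.
  { apply/eqP. rewrite eqn_leq rank_leq_row /= -{1}Hrk. exact: mxrankS. }
  split.
  - apply/B2. by rewrite /row_free Rk.
  - apply/B3. by rewrite -(mxrank_leqif_sup S1).2 Rk Hrk.
Qed.

Lemma Lindep n k B m A : (forall j, (j < k)%coq_nat -> in_colspace n m A (fun i => B i j)) ->
  (forall j, (j < m)%coq_nat -> in_colspace n k B (fun i => A i j)) -> rank_eq n m A k -> lin_indep n k B.
Proof.
  move=> H1 H2 Hr. have Hrk := G1 Hr.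
  move/B3: H1 => S1. move/B3: H2 => S2.
  apply/B2. rewrite /row_free. apply/eqP. apply: (etrans _ Hrk). apply/eqP. by rewrite eqn_leq !mxrankS.
Qed.

Lemma Ltrans n k Y m X v : in_colspace n k Y v ->
  (forall l, (l < k)%coq_nat -> in_colspace n m X (fun i => Y i l)) -> in_colspace n m X v.
Proof. move=> /B1 H1 /B3 H2. apply/B1. exact: submx_trans H1 H2. Qed.

Definition invf k F (i j : nat) : R := mxget (invmx (mk k k F)) i j.

Lemma Linv k F : (\det (mk k k F))%R <> 0 -> forall i j, (i < k)%coq_nat -> (j < k)%coq_nat ->
  sumR k (fun l => F i l * invf k F l j) = kdelta i j /\ sumR k (fun l => invf k F i l * F l j) = kdelta i j.
Proof.
  move=> Hd i j Hi Hj.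
  have U : mk k k F \in unitmx by rewrite unitmxE unitfE; apply/eqP.
  have Hi' : (i < k)%N by apply/ltP. have Hj' : (j < k)%N by apply/ltP.
  have Hk : forall (A B : 'M[R]_k), (A *m B = 1%:M)%R ->
      sumR k (fun l => mxget A i l * mxget B l j) = kdelta i j.
  { move=> A B E. have := congr1 (fun M : 'M_k => M (Ordinal Hi') (Ordinal Hj')) E.
    rewrite !mxE /= => E2. rewrite sumR_big.
    have -> : (\sum_(l < k) mxget A i l * mxget B l j)%R = (\sum_(l < k) A (Ordinal Hi') l * B l (Ordinal Hj'))%R.
    { apply: eq_bigr => l _. by rewrite -(mxget_ord A (Ordinal Hi') l) -(mxget_ord B l (Ordinal Hj')). }
    rewrite E2 /kdelta. case: (Nat.eqb_spec i j) => [Eij|Hne].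
    - have -> : Ordinal Hi' = Ordinal Hj' by apply: val_inj.
      by rewrite eqxx.
    - have -> : (Ordinal Hi' == Ordinal Hj') = false.
      { apply/negP => /eqP [] E3. by apply: Hne. }
      by []. }
  split.
  - rewrite -(Hk _ _ (mulmxV U)). apply: sumR_ext => l Hl. by rewrite mxget_mk.
  - rewrite -(Hk _ _ (mulVmx U)). apply: sumR_ext => l Hl. by rewrite mxget_mk.
Qed.

Definition detF k F : R := (\det (mk k k F))%R.

Lemma detf0 e x : detf 0 e x = 1.
Proof. by rewrite /detf det_mx00. Qed.

Lemma detf_ext k e e' : (forall a b x, (a < k)%coq_nat -> (b < k)%coq_nat -> e a b x = e' a b x) ->
  forall x, detf k e x = detf k e' x.
Proof. move=> H x. rewrite /detf. congr (\det _)%R. apply/matrixP => a b. rewrite !mxE. by apply: H; apply/ltP. Qed.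

End MC.

Lemma LL_det' N k e : (forall a b, (a < k)%nat -> (b < k)%nat -> LL N (e a b)) -> LL N (MC.detf k e).
Proof.
  intros H.
  apply (LL_ext _ (MC.detf k (fun a b => if (Nat.ltb a k && Nat.ltb b k)%bool then e a b else (fun _ => 0)))).
  - apply MC.detf_ext. intros a b x Ha Hb. apply Nat.ltb_lt in Ha, Hb. rewrite Ha, Hb. reflexivity.
  - apply MC.LL_det. intros a b. destruct (Nat.ltb_spec a k), (Nat.ltb_spec b k); simpl;
    try apply LL_const. apply H; auto.
Qed.

Lemma det_null N k : (1 <= N)%nat -> forall idx : nat -> nat -> nat,
  (forall a b, (a < k)%nat -> (b < k)%nat -> (idx a b < N)%nat) ->
  (forall a b a' b', (a < k)%nat -> (b < k)%nat -> (a' < k)%nat -> (b' < k)%nat ->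
      idx a b = idx a' b' -> a = a' /\ b = b') ->
  null_set N (fun x => MC.detf k (fun a b x => x (idx a b)) x = 0).
Proof.
  intros HN. induction k; intros idx Hlt Hinj.
  - apply null_empty; auto. intros x. rewrite MC.detf0. lra.
  - set (t := idx O O).
    set (C := MC.detf k (fun a b x => x (idx (S a) (S b)))).
    set (Rr := MC.detf (S k) (fun a b => if (Nat.eqb a 0 && Nat.eqb b 0)%bool then (fun _ => 0) else (fun x => x (idx a b)))).
    apply null_sub with (fun x => exists j : nat, match j with O => C x = 0 | _ => C x <> 0 /\ x t * C x + Rr x = 0 end).
    + intros x Hx. destruct (Req_dec (C x) 0) as [H0|H0].
      * exists O. exact H0.
      * exists 1%nat. split; auto. rewrite <- Hx. unfold C, Rr, t. rewrite (MC.det_affine k (fun a b x => x (idx a b)) x). reflexivity.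
    + apply null_union. intros [|j].
      * apply IHk.
        -- intros a b Ha Hb. apply Hlt; lia.
        -- intros a b a' b' Ha Hb Ha' Hb' E. destruct (Hinj (S a) (S b) (S a') (S b') ltac:(lia) ltac:(lia) ltac:(lia) ltac:(lia) E). lia.
      * apply graph_null.
        -- apply Hlt; lia.
        -- apply LL_det'. intros a b Ha Hb. apply LL_coord. apply Hlt; lia.
        -- apply LL_det'. intros a b Ha Hb. destruct (Nat.eqb a 0 && Nat.eqb b 0)%bool.
           apply LL_const. apply LL_coord. apply Hlt; lia.
        -- intros x u. apply MC.det_indep. intros a b Ha Hb. unfold upd.
           destruct (Nat.eqb_spec (idx (S a) (S b)) t); auto.
           destruct (Hinj (S a) (S b) O O ltac:(lia) ltac:(lia) ltac:(lia) ltac:(lia) e). lia.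
        -- intros x u. apply MC.det_indep. intros a b Ha Hb. unfold upd.
           destruct (Nat.eqb_spec a 0), (Nat.eqb_spec b 0); simpl; auto;
           destruct (Nat.eqb_spec (idx a b) t) as [Et|Et]; auto;
           destruct (Hinj a b O O ltac:(lia) ltac:(lia) ltac:(lia) ltac:(lia) Et); lia.
Qed.


Lemma ics_ext n k Y v v' : (forall i, (i < n)%nat -> v i = v' i) -> in_colspace n k Y v -> in_colspace n k Y v'.
Proof. intros E [c Hc]. exists c. intros i Hi. rewrite <- E by auto. auto. Qed.

Lemma ics_trunc n a b Y v : in_colspace n a Y v -> in_colspace n (a + b) Y v.
Proof. intros [c Hc]. exists (fun l => if Nat.ltb l a then c l else 0). intros i Hi.
  rewrite sumR_add, Hc by auto. rewrite (sumR_zero b).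
  - rewrite Rplus_0_r. apply sumR_ext. intros l Hl. apply Nat.ltb_lt in Hl. rewrite Hl; auto.
  - intros l Hl. replace (Nat.ltb (a + l) a) with false by (symmetry; apply Nat.ltb_ge; lia). ring. Qed.

Lemma ics_shift n a b Y v : in_colspace n b (fun i l => Y i (a + l)%nat) v -> in_colspace n (a + b) Y v.
Proof. intros [c Hc]. exists (fun l => if Nat.ltb l a then 0 else c (l - a)%nat). intros i Hi.
  rewrite sumR_add, Hc by auto. rewrite (sumR_zero a).
  - rewrite Rplus_0_l. apply sumR_ext. intros l Hl. replace (Nat.ltb (a + l) a) with false by (symmetry; apply Nat.ltb_ge; lia).
    replace (a + l - a)%nat with l by lia. reflexivity.
  - intros l Hl. apply Nat.ltb_lt in Hl. rewrite Hl. ring. Qed.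

Lemma solve_lin k F y z : MC.detF k F <> 0 ->
  (forall a, (a < k)%nat -> sumR k (fun l => F a l * y l) = z a) ->
  forall l, (l < k)%nat -> y l = sumR k (fun a => MC.invf k F l a * z a).
Proof.
  intros Hd H l Hl.
  rewrite (sumR_ext k _ (fun a => sumR k (fun m => MC.invf k F l a * F a m * y m))).
  2:{ intros a Ha. rewrite <- H by auto. rewrite <- sumR_scal. apply sumR_ext; intros; ring. }
  rewrite sumR_swap.
  rewrite (sumR_ext k _ (fun m => kdelta l m * y m)).
  - rewrite sumR_delta'; auto.
  - intros m Hm. rewrite (sumR_ext k _ (fun a => y m * (MC.invf k F l a * F a m))) by (intros; ring).
    rewrite sumR_scal. destruct (MC.Linv k F Hd l m Hl Hm) as [_ E]. rewrite E. ring.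
Qed.

Section Main.
Variables (n m1 m2 r r1 r2 : nat).
Hypotheses (Hr1 : (1 <= r1)%nat) (Hr2 : (1 <= r2)%nat) (Hr1r : (r1 <= r)%nat) (Hr2r : (r2 <= r)%nat)
  (Hrn : (r <= n)%nat) (Hrr : (r <= r1 + r2)%nat).

Definition p := (r - r2)%nat.
Definition q := (r - r1)%nat.
Definition s := (r1 + r2 - r)%nat.
Definition MM := Nat.max p q.
Definition sel1 a := if Nat.ltb a p then a else (MM + (a - p))%nat.
Definition sel3 a := if Nat.ltb a q then a else (MM + (a - q))%nat.

Lemma arith : r1 = (p + s)%nat /\ r2 = (s + q)%nat /\ r = (p + s + q)%nat /\ (MM + s <= n)%nat /\ (p <= MM)%nat /\ (q <= MM)%nat.
Proof. unfold MM, p, q, s. destruct (Nat.max_spec (r - r2) (r - r1)) as [[H1 H2]|[H1 H2]]; rewrite H2; lia. Qed.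

Definition rows (V : mat) : Prop :=
  (forall a j, (a < r1)%nat -> (j < p)%nat -> V (sel1 a) j = kdelta a j) /\
  (forall a b, (a < s)%nat -> (b < s)%nat -> V (MM + a)%nat (p + b)%nat = kdelta a b) /\
  (forall a j, (a < r2)%nat -> (j < q)%nat -> V (sel3 a) (r1 + j)%nat = kdelta a j).

Lemma kdelta_ne i j : i <> j -> kdelta i j = 0.
Proof. unfold kdelta; intros; destruct (Nat.eqb_spec i j); [lia|auto]. Qed.

Lemma pattern_rows V : canonical_pattern r1 r2 r V <-> rows V.
Proof.
  destruct arith as (E1 & E2 & E3 & E4 & E5 & E6).
  unfold canonical_pattern, rows. fold p q s. fold MM. split.
  - intros (C1 & C2 & C3 & C4 & C5). split; [|split].
    + intros a j Ha Hj. unfold sel1. destruct (Nat.ltb_spec a p).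
      * apply C1; auto.
      * rewrite C4 by lia. rewrite kdelta_ne by lia. reflexivity.
    + intros; apply C3; auto.
    + intros a j Ha Hj. unfold sel3. replace r1 with (r - q)%nat by (unfold q; lia). replace (r - q)%nat with r1 by (unfold q; lia).
      destruct (Nat.ltb_spec a q).
      * apply C2; auto.
      * rewrite C5 by lia. rewrite kdelta_ne by lia. reflexivity.
  - intros (R1 & R2 & R3). split; [|split; [|split; [|split]]].
    + intros i j Hi Hj. replace i with (sel1 i) at 1 by (unfold sel1; destruct (Nat.ltb_spec i p); lia). apply R1; lia.
    + intros i j Hi Hj. replace i with (sel3 i) at 1 by (unfold sel3; destruct (Nat.ltb_spec i q); lia). apply R3; lia.
    + intros; apply R2; auto.
    + intros a j Ha Hj. replace (MM + a)%nat with (sel1 (p + a)) by (unfold sel1; destruct (Nat.ltb_spec (p + a) p); lia).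
      rewrite R1 by lia. apply kdelta_ne; lia.
    + intros a j Ha Hj. replace (MM + a)%nat with (sel3 (q + a)) by (unfold sel3; destruct (Nat.ltb_spec (q + a) q); lia).
      rewrite R3 by lia. apply kdelta_ne; lia.
Qed.

Lemma sel1_lt a : (a < r1)%nat -> (sel1 a < n)%nat.
Proof. destruct arith as (E1 & E2 & E3 & E4 & E5 & E6). unfold sel1; destruct (Nat.ltb_spec a p); lia. Qed.
Lemma sel3_lt a : (a < r2)%nat -> (sel3 a < n)%nat.
Proof. destruct arith as (E1 & E2 & E3 & E4 & E5 & E6). unfold sel3; destruct (Nat.ltb_spec a q); lia. Qed.
Lemma sel1_lo a : (a < p)%nat -> sel1 a = a.
Proof. unfold sel1; destruct (Nat.ltb_spec a p); lia. Qed.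
Lemma sel1_hi a : (p <= a)%nat -> sel1 a = (MM + (a - p))%nat.
Proof. unfold sel1; destruct (Nat.ltb_spec a p); lia. Qed.
Lemma sel3_lo a : (a < q)%nat -> sel3 a = a.
Proof. unfold sel3; destruct (Nat.ltb_spec a q); lia. Qed.
Lemma sel3_hi a : (q <= a)%nat -> sel3 a = (MM + (a - q))%nat.
Proof. unfold sel3; destruct (Nat.ltb_spec a q); lia. Qed.

Lemma indep12 V : rows V -> lin_indep n r1 V.
Proof.
  destruct arith as (E1 & E2 & E3 & E4 & E5 & E6). intros (R1 & R2 & R3) c Hc.
  assert (Hs : forall a, (a < s)%nat -> c (p + a)%nat = 0).
  { intros a Ha. specialize (Hc (MM + a)%nat ltac:(lia)). rewrite E1, sumR_add in Hc.
    rewrite (sumR_zero p) in Hc.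
    - rewrite Rplus_0_l in Hc. rewrite <- Hc. rewrite (sumR_ext s _ (fun b => c (p + b)%nat * kdelta a b)).
      + rewrite sumR_delta; auto.
      + intros b Hb. rewrite R2; auto.
    - intros j Hj. replace (MM + a)%nat with (sel1 (p + a)) by (rewrite sel1_hi; lia).
      rewrite R1 by lia. rewrite kdelta_ne by lia. ring. }
  intros j Hj. destruct (Nat.lt_ge_cases j p).
  - specialize (Hc j ltac:(lia)). rewrite E1, sumR_add in Hc.
    assert (S1 : sumR p (fun b => c b * V j b) = c j).
    { rewrite (sumR_ext p _ (fun b => c b * kdelta j b)). apply sumR_delta; auto.
      intros b Hb. replace j with (sel1 j) at 1 by (apply sel1_lo; lia). rewrite R1 by lia. reflexivity. }
    assert (S2 : sumR s (fun b => c (p + b)%nat * V j (p + b)%nat) = 0).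
    { apply sumR_zero. intros b Hb. rewrite Hs by auto. ring. }
    rewrite S1, S2 in Hc. lra.
  - replace j with (p + (j - p))%nat by lia. apply Hs. lia.
Qed.

Lemma indep23 V : rows V -> lin_indep n r2 (fun i j => V i (p + j)%nat).
Proof.
  destruct arith as (E1 & E2 & E3 & E4 & E5 & E6). intros (R1 & R2 & R3) c Hc.
  assert (Hs : forall a, (a < s)%nat -> c a = 0).
  { intros a Ha. specialize (Hc (MM + a)%nat ltac:(lia)). rewrite E2, sumR_add in Hc.
    rewrite (sumR_zero q) in Hc.
    - rewrite Rplus_0_r in Hc. rewrite <- Hc. rewrite (sumR_ext s _ (fun b => c b * kdelta a b)).
      + rewrite sumR_delta; auto.
      + intros b Hb. rewrite R2; auto.
    - intros j Hj. replace (MM + a)%nat with (sel3 (q + a)) by (rewrite sel3_hi; lia).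
      replace (p + (s + j))%nat with (r1 + j)%nat by lia.
      rewrite R3 by lia. rewrite kdelta_ne by lia. ring. }
  intros j Hj. destruct (Nat.lt_ge_cases j s).
  - apply Hs; auto.
  - set (j' := (j - s)%nat). replace j with (s + j')%nat by (unfold j'; lia).
    specialize (Hc j' ltac:(unfold j'; lia)). rewrite E2, sumR_add in Hc.
    rewrite (sumR_zero s) in Hc.
    + rewrite Rplus_0_l in Hc. rewrite <- Hc. rewrite (sumR_ext q _ (fun b => c (s + b)%nat * kdelta j' b)).
      * rewrite sumR_delta; auto. unfold j'; lia.
      * intros b Hb. replace (p + (s + b))%nat with (r1 + b)%nat by lia.
        replace j' with (sel3 j') at 1 by (apply sel3_lo; unfold j'; lia). rewrite R3; auto. unfold j'; lia.
    + intros b Hb. rewrite Hs by auto. ring.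
Qed.

Variable x : nat -> R.
Definition W i k := x (i * r + k)%nat.
Definition G1 a b := x (n * r + a * m1 + b)%nat.
Definition G2 a b := x (n * r + r1 * m1 + a * m2 + b)%nat.
Definition GG l j := if Nat.ltb j m1 then (if Nat.ltb l r1 then G1 l j else 0)
                     else (if Nat.ltb l p then 0 else G2 (l - p)%nat (j - m1)%nat).
Definition UU := param_U n m1 m2 r1 r2 r x.

Lemma HU1 i j : (j < m1)%nat -> view1 UU i j = sumR r1 (fun l => W i l * G1 l j).
Proof. intros Hj. unfold view1, UU, param_U. apply Nat.ltb_lt in Hj. rewrite Hj. reflexivity. Qed.

Lemma HU2 i j : (j < m2)%nat -> view2 m1 UU i j = sumR r2 (fun l => W i (p + l)%nat * G2 l j).
Proof. intros Hj. unfold view2, UU, param_U. replace (Nat.ltb (m1 + j) m1) with false by (symmetry; apply Nat.ltb_ge; lia).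
  replace (m1 + j - m1)%nat with j by lia. reflexivity. Qed.

Lemma HU i j : (j < m1 + m2)%nat -> UU i j = sumR r (fun l => W i l * GG l j).
Proof.
  destruct arith as (E1 & E2 & E3 & E4 & E5 & E6). intros Hj. destruct (Nat.lt_ge_cases j m1).
  - assert (UU i j = view1 UU i j) by reflexivity. rewrite H0, HU1 by auto.
    replace r with (r1 + q)%nat by lia. rewrite sumR_add. rewrite (sumR_zero q).
    + rewrite Rplus_0_r. apply sumR_ext. intros l Hl. unfold GG.
      replace (Nat.ltb j m1) with true by (symmetry; apply Nat.ltb_lt; lia).
      replace (Nat.ltb l r1) with true by (symmetry; apply Nat.ltb_lt; lia). reflexivity.
    + intros l Hl. unfold GG. replace (Nat.ltb j m1) with true by (symmetry; apply Nat.ltb_lt; lia).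
      replace (Nat.ltb (r1 + l) r1) with false by (symmetry; apply Nat.ltb_ge; lia). ring.
  - assert (UU i j = view2 m1 UU i (j - m1)%nat) by (unfold view2; replace (m1 + (j - m1))%nat with j by lia; reflexivity). rewrite H0, HU2 by lia.
    replace r with (p + r2)%nat by lia. rewrite sumR_add. rewrite (sumR_zero p).
    + rewrite Rplus_0_l. apply sumR_ext. intros l Hl. unfold GG.
      replace (Nat.ltb j m1) with false by (symmetry; apply Nat.ltb_ge; lia).
      replace (Nat.ltb (p + l) p) with false by (symmetry; apply Nat.ltb_ge; lia).
      replace (p + l - p)%nat with l by lia. reflexivity.
    + intros l Hl. unfold GG. replace (Nat.ltb j m1) with false by (symmetry; apply Nat.ltb_ge; lia).
      replace (Nat.ltb l p) with true by (symmetry; apply Nat.ltb_lt; lia). ring.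
Qed.


Definition F1 a b := W (sel1 a) b.
Definition F2 a b := W (MM + a)%nat (p + b)%nat.
Definition F3 a b := W (sel3 a) (p + b)%nat.
Definition I1 := MC.invf r1 F1.
Definition I2 := MC.invf s F2.
Definition I3 := MC.invf r2 F3.
Definition VV i j :=
  if Nat.ltb j p then sumR r1 (fun k => W i k * I1 k j)
  else if Nat.ltb j r1 then sumR s (fun k => W i (p + k)%nat * I2 k (j - p)%nat)
  else sumR r2 (fun k => W i (p + k)%nat * I3 k (j - r1)%nat).

Lemma kdelta_sym a b : kdelta a b = kdelta b a.
Proof. unfold kdelta. destruct (Nat.eqb_spec a b), (Nat.eqb_spec b a); auto; lia. Qed.

Section Good.
Hypotheses (D1 : MC.detF r1 F1 <> 0) (D2 : MC.detF s F2 <> 0) (D3 : MC.detF r2 F3 <> 0).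

Lemma VV_rows : rows VV.
Proof.
  destruct arith as (E1 & E2 & E3 & E4 & E5 & E6). split; [|split].
  - intros a j Ha Hj. unfold VV. replace (Nat.ltb j p) with true by (symmetry; apply Nat.ltb_lt; lia).
    apply (MC.Linv r1 F1 D1 a j Ha ltac:(lia)).
  - intros a b Ha Hb. unfold VV. replace (Nat.ltb (p + b) p) with false by (symmetry; apply Nat.ltb_ge; lia).
    replace (Nat.ltb (p + b) r1) with true by (symmetry; apply Nat.ltb_lt; lia).
    replace (p + b - p)%nat with b by lia.
    apply (MC.Linv s F2 D2 a b Ha Hb).
  - intros a j Ha Hj. unfold VV. replace (Nat.ltb (r1 + j) p) with false by (symmetry; apply Nat.ltb_ge; lia).
    replace (Nat.ltb (r1 + j) r1) with false by (symmetry; apply Nat.ltb_ge; lia).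
    replace (r1 + j - r1)%nat with j by lia.
    apply (MC.Linv r2 F3 D3 a j Ha ltac:(lia)).
Qed.

Lemma VV_col1 j : (j < r1)%nat -> in_colspace n r1 W (fun i => VV i j).
Proof.
  destruct arith as (E1 & E2 & E3 & E4 & E5 & E6). intros Hj. destruct (Nat.lt_ge_cases j p).
  - exists (fun k => I1 k j). intros i Hi. unfold VV. replace (Nat.ltb j p) with true by (symmetry; apply Nat.ltb_lt; lia).
    apply sumR_ext; intros; ring.
  - rewrite E1. apply ics_shift. exists (fun k => I2 k (j - p)%nat). intros i Hi. unfold VV.
    replace (Nat.ltb j p) with false by (symmetry; apply Nat.ltb_ge; lia).
    replace (Nat.ltb j r1) with true by (symmetry; apply Nat.ltb_lt; lia).
    apply sumR_ext; intros; ring.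
Qed.

Lemma VV_col2 j : (j < r2)%nat -> in_colspace n r2 (fun i l => W i (p + l)%nat) (fun i => VV i (p + j)%nat).
Proof.
  destruct arith as (E1 & E2 & E3 & E4 & E5 & E6). intros Hj. destruct (Nat.lt_ge_cases j s).
  - rewrite E2. apply ics_trunc. exists (fun k => I2 k j). intros i Hi. unfold VV.
    replace (Nat.ltb (p + j) p) with false by (symmetry; apply Nat.ltb_ge; lia).
    replace (Nat.ltb (p + j) r1) with true by (symmetry; apply Nat.ltb_lt; lia).
    replace (p + j - p)%nat with j by lia. apply sumR_ext; intros; ring.
  - exists (fun k => I3 k (p + j - r1)%nat). intros i Hi. unfold VV.
    replace (Nat.ltb (p + j) p) with false by (symmetry; apply Nat.ltb_ge; lia).
    replace (Nat.ltb (p + j) r1) with false by (symmetry; apply Nat.ltb_ge; lia).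
    apply sumR_ext; intros; ring.
Qed.

Lemma VV_col j : (j < r)%nat -> in_colspace n r W (fun i => VV i j).
Proof.
  destruct arith as (E1 & E2 & E3 & E4 & E5 & E6). intros Hj. destruct (Nat.lt_ge_cases j r1).
  - replace r with (r1 + q)%nat by lia. apply ics_trunc. apply VV_col1; auto.
  - replace r with (p + r2)%nat by lia. apply ics_shift.
    apply (ics_ext _ _ _ (fun i => VV i (p + (j - p))%nat)).
    + intros i Hi. replace (p + (j - p))%nat with j by lia. reflexivity.
    + apply VV_col2. lia.
Qed.

Hypotheses (Rk1 : rank_eq n m1 (view1 UU) r1) (Rk2 : rank_eq n m2 (view2 m1 UU) r2)
  (Rk : rank_eq n (m1 + m2) UU r).

Lemma HW1 : forall l, (l < r1)%nat -> in_colspace n m1 (view1 UU) (fun i => W i l).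
Proof. apply (MC.Lfactor n m1 r1 (view1 UU) W G1); auto. intros; apply HU1; auto. Qed.
Lemma HW2 : forall l, (l < r2)%nat -> in_colspace n m2 (view2 m1 UU) (fun i => W i (p + l)%nat).
Proof. apply (MC.Lfactor n m2 r2 (view2 m1 UU) (fun i l => W i (p + l)%nat) G2); auto. intros; apply HU2; auto. Qed.
Lemma HW : lin_indep n r W /\ forall l, (l < r)%nat -> in_colspace n (m1 + m2) UU (fun i => W i l).
Proof. apply (MC.Lfactor n (m1 + m2) r UU W GG); auto. intros; apply HU; auto. Qed.

Lemma SB1 : is_colbasis n r1 VV m1 (view1 UU).
Proof. apply MC.Lcolbasis; auto. apply indep12, VV_rows. intros j Hj. eapply MC.Ltrans. apply VV_col1; auto. exact HW1. Qed.

Lemma SB2 : is_colbasis n r2 (fun i j => VV i (p + j)%nat) m2 (view2 m1 UU).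
Proof. apply MC.Lcolbasis; auto. apply indep23, VV_rows. intros j Hj. eapply MC.Ltrans. apply VV_col2; auto. exact HW2. Qed.

Lemma SB : is_colbasis n r VV (m1 + m2) UU.
Proof.
  destruct arith as (E1 & E2 & E3 & E4 & E5 & E6).
  assert (Hc : forall j, (j < r)%nat -> in_colspace n (m1 + m2) UU (fun i => VV i j)).
  { intros j Hj. eapply MC.Ltrans. apply VV_col; auto. apply HW. }
  apply MC.Lcolbasis; auto. apply (MC.Lindep _ _ _ (m1 + m2) UU); auto.
  intros j Hj. destruct (Nat.lt_ge_cases j m1).
  - replace r with (r1 + q)%nat by lia. apply ics_trunc.
    destruct SB1 as (_ & _ & H3). apply H3. apply (MC.col_in n m1 (view1 UU) j H).
  - replace r with (p + r2)%nat by lia. apply ics_shift.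
    apply (ics_ext _ _ _ (fun i => view2 m1 UU i (j - m1)%nat)).
    + intros i Hi. unfold view2. replace (m1 + (j - m1))%nat with j by lia. reflexivity.
    + destruct SB2 as (_ & _ & H3). apply H3. apply (MC.col_in n m2 (view2 m1 UU) (j - m1)%nat). lia.
Qed.

Lemma exists_V : structured_basis n m1 m2 r1 r2 r UU VV /\ canonical_pattern r1 r2 r VV.
Proof. split. split; [exact SB1| split; [exact SB2| exact SB]]. apply pattern_rows, VV_rows. Qed.


Lemma unique_V Z : structured_basis n m1 m2 r1 r2 r UU Z /\ canonical_pattern r1 r2 r Z ->
  forall i j, (i < n)%nat -> (j < r)%nat -> Z i j = VV i j.
Proof.
  destruct arith as (E1 & E2 & E3 & E4 & E5 & E6).
  intros [[Z1 [Z2 Z3]] Hp]. apply pattern_rows in Hp. destruct Hp as (R1 & R2 & R3).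
  assert (U1W : forall j, (j < m1)%nat -> in_colspace n r1 W (fun i => view1 UU i j)).
  { intros j Hj. exists (fun l => G1 l j). intros i Hi. rewrite HU1 by auto. apply sumR_ext; intros; ring. }
  assert (U2W : forall j, (j < m2)%nat -> in_colspace n r2 (fun i l => W i (p + l)%nat) (fun i => view2 m1 UU i j)).
  { intros j Hj. exists (fun l => G2 l j). intros i Hi. rewrite HU2 by auto. apply sumR_ext; intros; ring. }
  assert (Zc1 : forall j, (j < r1)%nat -> in_colspace n r1 W (fun i => Z i j)).
  { intros j Hj. eapply MC.Ltrans. destruct Z1 as (H1 & _). apply H1; auto. exact U1W. }
  assert (Zc2 : forall j, (j < r2)%nat -> in_colspace n r2 (fun i l => W i (p + l)%nat) (fun i => Z i (p + j)%nat)).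
  { intros j Hj. eapply MC.Ltrans. destruct Z2 as (H1 & _). apply (H1 j Hj). exact U2W. }
  intros i j Hi Hj.
  destruct (Nat.lt_ge_cases j p) as [Hjp|Hjp]; [|destruct (Nat.lt_ge_cases j r1) as [Hjr|Hjr]].
  -
    destruct (Zc1 j ltac:(lia)) as [c Hc].
    assert (Hsol : forall l, (l < r1)%nat -> c l = I1 l j).
    { intros l Hl. rewrite (solve_lin r1 F1 c (fun a => kdelta a j) D1).
      - rewrite (sumR_ext r1 _ (fun a => MC.invf r1 F1 l a * kdelta j a)) by (intros; rewrite kdelta_sym; reflexivity).
        apply sumR_delta; lia.
      - intros a Ha. rewrite <- (R1 a j Ha Hjp). rewrite (Hc (sel1 a)) by (apply sel1_lt; auto).
        apply sumR_ext; intros; unfold F1; ring.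
      - exact Hl. }
    rewrite Hc by auto. unfold VV. replace (Nat.ltb j p) with true by (symmetry; apply Nat.ltb_lt; lia).
    apply sumR_ext. intros l Hl. rewrite Hsol by auto. ring.
  -
    destruct (Zc1 j ltac:(lia)) as [c Hc].
    destruct (Zc2 (j - p)%nat ltac:(lia)) as [d Hd].
    replace (p + (j - p))%nat with j in Hd by lia.
    destruct HW as [HWi _].
    assert (Hz : forall l, (l < r)%nat -> (if Nat.ltb l r1 then c l else 0) - (if Nat.ltb l p then 0 else d (l - p)%nat) = 0).
    { apply HWi. intros i0 Hi0.
      rewrite (sumR_ext r _ (fun l => (if Nat.ltb l r1 then c l else 0) * W i0 l - (if Nat.ltb l p then 0 else d (l - p)%nat) * W i0 l))
        by (intros; ring).
      rewrite sumR_minus.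
      assert (A1 : sumR r (fun l => (if Nat.ltb l r1 then c l else 0) * W i0 l) = Z i0 j).
      { rewrite Hc by auto. replace r with (r1 + q)%nat by lia. rewrite sumR_add, (sumR_zero q).
        - rewrite Rplus_0_r. apply sumR_ext. intros l Hl. replace (Nat.ltb l r1) with true by (symmetry; apply Nat.ltb_lt; lia). ring.
        - intros l Hl. replace (Nat.ltb (r1 + l) r1) with false by (symmetry; apply Nat.ltb_ge; lia). ring. }
      assert (A2 : sumR r (fun l => (if Nat.ltb l p then 0 else d (l - p)%nat) * W i0 l) = Z i0 j).
      { rewrite Hd by auto. replace r with (p + r2)%nat by lia. rewrite sumR_add, (sumR_zero p).
        - rewrite Rplus_0_l. apply sumR_ext. intros l Hl. replace (Nat.ltb (p + l) p) with false by (symmetry; apply Nat.ltb_ge; lia).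
          replace (p + l - p)%nat with l by lia. ring.
        - intros l Hl. replace (Nat.ltb l p) with true by (symmetry; apply Nat.ltb_lt; lia). ring. }
      rewrite A1, A2. ring. }
    assert (Hc0 : forall l, (l < p)%nat -> c l = 0).
    { intros l Hl. specialize (Hz l ltac:(lia)).
      replace (Nat.ltb l r1) with true in Hz by (symmetry; apply Nat.ltb_lt; lia).
      replace (Nat.ltb l p) with true in Hz by (symmetry; apply Nat.ltb_lt; lia). lra. }
    assert (Hc' : forall i0, (i0 < n)%nat -> Z i0 j = sumR s (fun k => c (p + k)%nat * W i0 (p + k)%nat)).
    { intros i0 Hi0. rewrite Hc by auto. rewrite E1, sumR_add, (sumR_zero p).
      - ring.
      - intros l Hl. rewrite Hc0 by auto. ring. }
    assert (Hsol : forall k, (k < s)%nat -> c (p + k)%nat = I2 k (j - p)%nat).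
    { intros k Hk. rewrite (solve_lin s F2 (fun k => c (p + k)%nat) (fun a => kdelta a (j - p)%nat) D2).
      - rewrite (sumR_ext s _ (fun a => MC.invf s F2 k a * kdelta (j - p)%nat a)) by (intros; rewrite kdelta_sym; reflexivity).
        apply sumR_delta; lia.
      - intros a Ha. rewrite <- (R2 a (j - p)%nat Ha ltac:(lia)). replace (p + (j - p))%nat with j by lia.
        rewrite (Hc' (MM + a)%nat) by lia. apply sumR_ext; intros; unfold F2; ring.
      - exact Hk. }
    rewrite Hc' by auto. unfold VV. replace (Nat.ltb j p) with false by (symmetry; apply Nat.ltb_ge; lia).
    replace (Nat.ltb j r1) with true by (symmetry; apply Nat.ltb_lt; lia).
    apply sumR_ext. intros k Hk. rewrite Hsol by auto. ring.
  -
    destruct (Zc2 (j - p)%nat ltac:(lia)) as [d Hd].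
    replace (p + (j - p))%nat with j in Hd by lia.
    assert (Hsol : forall k, (k < r2)%nat -> d k = I3 k (j - r1)%nat).
    { intros k Hk. rewrite (solve_lin r2 F3 d (fun a => kdelta a (j - r1)%nat) D3).
      - rewrite (sumR_ext r2 _ (fun a => MC.invf r2 F3 k a * kdelta (j - r1)%nat a)) by (intros; rewrite kdelta_sym; reflexivity).
        apply sumR_delta; lia.
      - intros a Ha. rewrite <- (R3 a (j - r1)%nat Ha ltac:(lia)). replace (r1 + (j - r1))%nat with j by lia.
        rewrite (Hd (sel3 a)) by (apply sel3_lt; auto). apply sumR_ext; intros; unfold F3; ring.
      - exact Hk. }
    rewrite Hd by auto. unfold VV. replace (Nat.ltb j p) with false by (symmetry; apply Nat.ltb_ge; lia).
    replace (Nat.ltb j r1) with false by (symmetry; apply Nat.ltb_ge; lia).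
    apply sumR_ext. intros k Hk. rewrite Hsol by auto. ring.
Qed.

Lemma good_unique : unique_canonical_basis n m1 m2 r1 r2 r UU.
Proof. exists VV. split. apply exists_V. apply unique_V. Qed.

End Good.
End Main.


Lemma idx_inj r u b u' b' : (b < r)%nat -> (b' < r)%nat -> (u * r + b = u' * r + b')%nat -> u = u' /\ b = b'.
Proof. intros Hb Hb' E.
  assert (u = (u * r + b) / r)%nat by (apply (Nat.div_unique _ _ _ b); lia).
  assert (u' = (u' * r + b') / r)%nat by (apply (Nat.div_unique _ _ _ b'); lia).
  assert (u = u') by (rewrite H, H0, E; reflexivity). subst. split; auto. lia. Qed.

Lemma idx_lt n r u b : (u < n)%nat -> (b < r)%nat -> (u * r + b < n * r)%nat.
Proof. intros. nia. Qed.

Theorem proposition2 :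
  forall n m1 m2 r r1 r2 : nat,
    (1 <= n)%nat -> (1 <= m1)%nat -> (1 <= m2)%nat ->
    (1 <= r1)%nat -> (1 <= r2)%nat -> (r1 <= r)%nat -> (r2 <= r)%nat ->
    (r <= n)%nat -> (r <= r1 + r2)%nat ->
    null_set (param_dim n m1 m2 r1 r2 r)
      (fun x =>
         let U := param_U n m1 m2 r1 r2 r x in
         rank_eq n m1 (view1 U) r1 /\
         rank_eq n m2 (view2 m1 U) r2 /\
         rank_eq n (m1 + m2) U r /\
         ~ unique_canonical_basis n m1 m2 r1 r2 r U).
Proof.
  intros n m1 m2 r r1 r2 Hn Hm1 Hm2 Hr1 Hr2 Hr1r Hr2r Hrn Hrr.
  set (N := param_dim n m1 m2 r1 r2 r).
  assert (HN : (1 <= N)%nat) by (unfold N, param_dim; nia).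
  assert (HnrN : (n * r <= N)%nat) by (unfold N, param_dim; lia).
  destruct (arith n r r1 r2 Hr1 Hr2 Hr1r Hr2r Hrn Hrr) as (E1 & E2 & E3 & E4 & E5 & E6).
  pose proof (sel1_lt n r r1 r2 Hr1 Hr2 Hr1r Hr2r Hrn Hrr) as L1.
  pose proof (sel3_lt n r r1 r2 Hr1 Hr2 Hr1r Hr2r Hrn Hrr) as L3.
  assert (I1 : forall a a', (a < r1)%nat -> (a' < r1)%nat -> sel1 r r1 r2 a = sel1 r r1 r2 a' -> a = a').
  { intros a a' Ha Ha'. unfold sel1. destruct (Nat.ltb_spec a (p r r2)), (Nat.ltb_spec a' (p r r2)); lia. }
  assert (I3 : forall a a', (a < r2)%nat -> (a' < r2)%nat -> sel3 r r1 r2 a = sel3 r r1 r2 a' -> a = a').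
  { intros a a' Ha Ha'. unfold sel3. destruct (Nat.ltb_spec a (q r r1)), (Nat.ltb_spec a' (q r r1)); lia. }
  apply null_sub with (fun x => exists j : nat, match j with
     | O => MC.detF r1 (F1 r r1 r2 x) = 0
     | 1%nat => MC.detF (s r r1 r2) (F2 r r1 r2 x) = 0
     | _ => MC.detF r2 (F3 r r1 r2 x) = 0 end).
  - intros x (H1 & H2 & H3 & H4).
    destruct (Req_dec (MC.detF r1 (F1 r r1 r2 x)) 0) as [D1|D1]; [exists O; exact D1|].
    destruct (Req_dec (MC.detF (s r r1 r2) (F2 r r1 r2 x)) 0) as [D2|D2]; [exists 1%nat; exact D2|].
    destruct (Req_dec (MC.detF r2 (F3 r r1 r2 x)) 0) as [D3|D3]; [exists 2%nat; exact D3|].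
    exfalso. apply H4. exact (good_unique n m1 m2 r r1 r2 Hr1 Hr2 Hr1r Hr2r Hrn Hrr x D1 D2 D3 H1 H2 H3).
  - apply null_union. intros [|[|j]].
    + apply null_sub with (fun x => MC.detf r1 (fun a b x => x (sel1 r r1 r2 a * r + b)%nat) x = 0).
      { intros x H. exact H. }
      apply det_null; auto.
      * intros a b Ha Hb. pose proof (idx_lt n r (sel1 r r1 r2 a) b (L1 a Ha) ltac:(lia)). lia.
      * intros a b a' b' Ha Hb Ha' Hb' E. apply idx_inj in E; try lia. destruct E as [E E']. split; auto.
    + apply null_sub with (fun x => MC.detf (s r r1 r2) (fun a b x => x ((MM r r1 r2 + a) * r + (p r r2 + b))%nat) x = 0).
      { intros x H. exact H. }
      apply det_null; auto.
      * intros a b Ha Hb. pose proof (idx_lt n r (MM r r1 r2 + a) (p r r2 + b) ltac:(lia) ltac:(lia)). lia.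
      * intros a b a' b' Ha Hb Ha' Hb' E. apply idx_inj in E; try lia.
    + apply null_sub with (fun x => MC.detf r2 (fun a b x => x (sel3 r r1 r2 a * r + (p r r2 + b))%nat) x = 0).
      { intros x H. exact H. }
      apply det_null; auto.
      * intros a b Ha Hb. pose proof (idx_lt n r (sel3 r r1 r2 a) (p r r2 + b) (L3 a Ha) ltac:(lia)). lia.
      * intros a b a' b' Ha Hb Ha' Hb' E. apply idx_inj in E; try lia. destruct E as [E E']. split; auto. lia.
Qed.
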